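(* Let $T$ be a nonempty tree. Then $\pi(T)=\nu(T)+1$. Equivalently, $T$ has nullity $m$ if and only if a minimal partition of $T$ into always solvable subtrees has exactly $m+1$ parts.
   Context: For a finite simple graph $G$ with vertex set $\{v_1,\dots,v_n\}$, the closed adjacency matrix $N(G)$ is the $n\times n$ matrix over $\mathbb{Z}_2$ whose $(i,j)$ entry is $1$ iff $i=j$ or $v_i$ is adjacent to $v_j$. The nullity is $\nu(G):=\dim\operatorname{Ker}(N(G))$ over $\mathbb{Z}_2$, and $G$ is always solvable if $\nu(G)=0$. A partition of a tree $T$ into always solvable subtrees is a set $\{T_1,\dots,T_k\}$ of subtrees (connected induced subgraphs) of $T$ whose vertex sets are pairwise disjoint with union $V(T)$, each $T_i$ being always solvable (such partitions exist, e.g. into single vertices, since $K_1$ is always solvable). $\pi(T)$ denotes the minimum cardinality $k$ of such a partition. *)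

(* Defs.v *)
From mathcomp Require Import all_boot all_order all_algebra.
Set Implicit Arguments. Unset Strict Implicit. Unset Printing Implicit Defensive.
Import GRing.Theory.
Local Open Scope ring_scope.

Definition simple_graph (V : finType) (e : rel V) : Prop :=
  symmetric e /\ irreflexive e.

Definition induced_rel (V : finType) (e : rel V) (S : {set V}) : rel V :=
  fun x y => [&& x \in S, y \in S & e x y].

Definition connected_set (V : finType) (e : rel V) (S : {set V}) : Prop :=
  S != set0 /\ forall x y, x \in S -> y \in S -> connect (induced_rel e S) x y.

Definition remove_edge (V : finType) (e : rel V) (u v : V) : rel V :=
  fun x y => e x y && ~~ (((x == u) && (y == v)) || ((x == v) && (y == u))).

Definition acyclic (V : finType) (e : rel V) : Prop :=
  forall u v, e u v -> ~~ connect (remove_edge e u v) u v.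

Definition is_tree (V : finType) (e : rel V) : Prop :=
  simple_graph e /\ connected_set e [set: V] /\ acyclic e.

Definition closed_adj (V : finType) (e : rel V) (S : {set V}) :
  'M['F_2]_#|S| :=
  \matrix_(i, j) (((i == j) || e (enum_val i) (enum_val j)) : nat)%:R.

Definition nullity (V : finType) (e : rel V) (S : {set V}) : nat :=
  (#|S| - \rank (closed_adj e S))%N.

Definition always_solvable (V : finType) (e : rel V) (S : {set V}) : Prop :=
  nullity e S = 0%N.

(* A partition of T into always solvable subtrees: a partition P of the
   vertex set (blocks nonempty, pairwise disjoint, covering V) each of whose
   blocks induces a connected (hence a sub-tree) always solvable subgraph. *)
Definition as_tree_partition (V : finType) (e : rel V) (P : {set {set V}})
  : Prop :=
  partition P [set: V] /\
  forall B, B \in P -> connected_set e B /\ always_solvable e B.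

Definition is_pi (V : finType) (e : rel V) (k : nat) : Prop :=
  (exists P, as_tree_partition e P /\ #|P| = k) /\
  (forall P, as_tree_partition e P -> (k <= #|P|)%N).

(* Main.v *)
Require Import Defs.
From mathcomp Require Import all_boot all_order all_algebra.
From mathcomp Require Import zify.
Set Implicit Arguments. Unset Strict Implicit. Unset Printing Implicit Defensive.
Import GRing.Theory.
Local Open Scope ring_scope.

Lemma card_ker (m n : nat) (A : 'M['F_2]_(m, n)) :
  #|[set x : 'rV['F_2]_m | x *m A == 0]| = (2 ^ (m - \rank A))%N.
Proof.
rewrite -mxrank_ker.
set B := row_base (kermx A).
have -> : [set x : 'rV['F_2]_m | x *m A == 0] = [set w *m B | w in [set: 'rV_(\rank (kermx A))]].
  apply/setP=> x; rewrite inE -sub_kermx -(eq_row_base (kermx A)).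
  apply/submxP/imsetP => [[w ->]|[w _ ->]]; by exists w.
rewrite card_imset; last exact/row_free_inj/row_base_free.
by rewrite cardsT card_mx card_Fp // mul1n.
Qed.

Section Lin.
Variables (V : finType) (e : rel V).
Hypothesis sym_e : symmetric e.

Definition nb (w y : V) : bool := (y == w) || e y w.
Definition Nf (S : {set V}) (f : {ffun V -> 'F_2}) w := \sum_(y in S) (nb w y)%:R * f y.
Fact K_key : unit. Proof. exact: tt. Qed.
Definition K (S : {set V}) := locked_with K_key [set f : {ffun V -> 'F_2} |
  [forall v, (v \notin S) ==> (f v == 0)] && [forall w, (w \in S) ==> (Nf S f w == 0)]].

Lemma KE S : K S = [set f : {ffun V -> 'F_2} |
  [forall v, (v \notin S) ==> (f v == 0)] && [forall w, (w \in S) ==> (Nf S f w == 0)]].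
Proof. by rewrite /K unlock. Qed.

Lemma nbC w y : nb w y = nb y w.
Proof. by rewrite /nb eq_sym sym_e. Qed.

Lemma cardK S : #|K S| = (2 ^ nullity e S)%N.
Proof.
rewrite /nullity -card_ker.
pose g (x : 'rV['F_2]_#|S|) := [ffun v => \sum_(i | enum_val i == v) x 0 i].
have gval x j : g x (enum_val j) = x 0 j.
  rewrite ffunE (big_pred1 j) // => i /=; exact: (inj_eq enum_val_inj).
have gout x v : v \notin S -> g x v = 0.
  move=> vS; rewrite ffunE big_pred0 // => i; apply/eqP=> ev; move: vS.
  by rewrite -ev enum_valP.
have ginj : injective g.
  move=> x y gxy; apply/rowP=> j; rewrite -!gval; by rewrite gxy.
have NfE x j : Nf S (g x) (enum_val j) = (x *m closed_adj e S) 0 j.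
  rewrite /Nf mxE (big_enum_val (fun y => (nb (enum_val j) y)%:R * g x y)).
  apply: eq_bigr => i _; rewrite gval mxE mulrC /nb (inj_eq enum_val_inj).
  by [].
rewrite -(card_imset _ ginj); apply: eq_card => f; rewrite KE inE.
apply/andP/imsetP=> [[/forallP Hs /forallP Hk]|[x]].
  have gf : g (\row_i f (enum_val i)) = f.
    apply/ffunP=> v; case vS: (v \in S).
      by rewrite -(enum_rankK_in vS vS) gval mxE.
    by rewrite gout ?vS //; have := Hs v; rewrite vS => /eqP.
  exists (\row_i f (enum_val i)); last by rewrite gf.
  rewrite inE; apply/eqP/rowP=> j; rewrite [RHS]mxE -NfE gf.
  by have := Hk (enum_val j); rewrite enum_valP => /eqP.
rewrite inE => /eqP x0 ->; split.
  by apply/forallP=> v; apply/implyP=> vS; rewrite gout.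
apply/forallP=> w; apply/implyP=> wS.
by rewrite -(enum_rankK_in wS wS) NfE x0 mxE.
Qed.

Lemma F2_cases (x : 'F_2) : x = 0 \/ x = 1.
Proof. case: x => [[|[|//]]] i; [left|right]; exact: val_inj. Qed.

Lemma F2opp (x : 'F_2) : - x = x.
Proof. by case: (F2_cases x) => ->; rewrite ?oppr0 //; apply: val_inj. Qed.

Lemma F2xx (x : 'F_2) : x + x = 0.
Proof. by case: (F2_cases x) => ->; rewrite ?addr0 //; apply: val_inj. Qed.

Lemma F2add_eq0 (a b : 'F_2) : a + b = 0 -> a = b.
Proof. by move/eqP; rewrite addr_eq0 F2opp => /eqP. Qed.

Lemma KP (S : {set V}) (f : {ffun V -> 'F_2}) : f \in K S -> (forall v, v \notin S -> f v = 0) /\ (forall w, w \in S -> Nf S f w = 0).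
Proof.
rewrite KE inE => /andP[/forallP H1 /forallP H2]; split.
  by move=> v vS; have := H1 v; rewrite vS => /eqP.
by move=> w wS; have := H2 w; rewrite wS => /eqP.
Qed.

Lemma KI (S : {set V}) (f : {ffun V -> 'F_2}) : (forall v, v \notin S -> f v = 0) -> (forall w, w \in S -> Nf S f w = 0) -> f \in K S.
Proof.
move=> H1 H2; rewrite KE inE; apply/andP; split; apply/forallP=> x; apply/implyP.
  by move/H1 ->. by move/H2 ->.
Qed.

Lemma NfC (T : {set V}) (a b : {ffun V -> 'F_2}) : \sum_(w in T) a w * Nf T b w = \sum_(w in T) b w * Nf T a w.
Proof.
rewrite /Nf; under eq_bigr do rewrite big_distrr /=.
rewrite exchange_big /=; under [RHS]eq_bigr do rewrite big_distrr /=.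
apply: eq_bigr => i iT; apply: eq_bigr => j jT.
by rewrite nbC mulrCA [RHS]mulrCA (mulrC (a _)).
Qed.

Lemma sum_delta (T : {set V}) (a : V -> 'F_2) u c : u \in T -> \sum_(w in T) a w * ((w == u)%:R * c) = a u * c.
Proof.
move=> uT; rewrite (bigD1 u) //= eqxx mul1r big1 ?addr0 // => w /andP[_ /negPf ->].
by rewrite mul0r mulr0.
Qed.

Lemma NfD (T : {set V}) (a b : {ffun V -> 'F_2}) w : Nf T (a + b) w = Nf T a w + Nf T b w.
Proof. by rewrite /Nf -big_split /=; apply: eq_bigr => y _; rewrite ffunE mulrDr. Qed.

Lemma Nf_eq (T : {set V}) (a b : {ffun V -> 'F_2}) w : (forall y, y \in T -> a y = b y) -> Nf T a w = Nf T b w.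
Proof. by move=> H; apply: eq_bigr => y yT; rewrite H. Qed.

Section Split.
Variables (S1 S2 : {set V}) (u v : V).
Hypotheses (dis : [disjoint S1 & S2]) (uS1 : u \in S1) (vS2 : v \in S2) (euv : e u v)
  (cross : forall x y, x \in S1 -> y \in S2 -> e x y -> (x == u) && (y == v)).

Lemma cross1 f w : w \in S1 -> Nf (S1 :|: S2) f w = Nf S1 f w + (w == u)%:R * f v.
Proof.
move=> wS1; rewrite /Nf (eq_bigl [predU S1 & S2]); last by move=> y; rewrite inE.
rewrite bigU //; congr (_ + _).
have Hn y : y \in S2 -> nb w y = (w == u) && (y == v).
  move=> yS2; rewrite /nb; have -> : (y == w) = false.
    by apply/negbTE; apply: contraTneq yS2 => ->; rewrite (disjointFr dis wS1).
  rewrite /=; apply/idP/andP=> [eyw|[/eqP -> /eqP ->]]; last by rewrite sym_e.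
  by apply/andP; apply: cross => //; rewrite sym_e.
rewrite (bigD1 v) //= big1 ?addr0; last first.
  by move=> y /andP[yS2 /negPf yv]; rewrite Hn // yv andbF mul0r.
by rewrite Hn // eqxx andbT.
Qed.

Lemma KS_S1 f w : f \in K (S1 :|: S2) -> w \in S1 -> Nf S1 f w = (w == u)%:R * f v.
Proof.
move=> /KP[_ H] wS1; apply: F2add_eq0; rewrite -cross1 // H //.
by rewrite inE wS1.
Qed.

Lemma claimA x g : x \in K (S1 :|: S2) -> x v = 1 -> g \in K S1 -> g u = 0.
Proof.
move=> xK xv /KP[_ gK].
rewrite -[g u]mulr1 -xv -(sum_delta g (x v) uS1).
under eq_bigr => w wS1 do rewrite -KS_S1 //.
rewrite NfC big1 // => w wS1; by rewrite gK // mulr0.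
Qed.

Lemma noboth1 f g : f \in K (S1 :|: S2) -> g \in K (S1 :|: S2) -> g v = 0 -> g u * f v = 0.
Proof.
move=> fK gK gv.
rewrite -(sum_delta g (f v) uS1).
under eq_bigr => w wS1 do rewrite -KS_S1 //.
rewrite NfC big1 // => w wS1; by rewrite KS_S1 // gv !mulr0.
Qed.
End Split.

Lemma KD (S : {set V}) (f g : {ffun V -> 'F_2}) : f \in K S -> g \in K S -> f + g \in K S.
Proof.
move=> /KP[f1 f2] /KP[g1 g2]; apply: KI => [y yS|w wS]; first by rewrite ffunE f1 ?g1 ?addr0.
by rewrite NfD f2 ?g2 ?addr0.
Qed.

Lemma K0 (S : {set V}) : 0 \in K S.
Proof.
apply: KI => [y _|w _]; first by rewrite ffunE.
by rewrite /Nf big1 // => y _; rewrite ffunE mulr0.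
Qed.

Definition rs (T : {set V}) (f : {ffun V -> 'F_2}) := [ffun y => if y \in T then f y else 0].

Lemma F2_logic (a b c d : 'F_2) :
  let C := fun (qu qv pu pv : 'F_2) => ((qv == 0) ==> (qu * pv == 0)) && ((qu == 0) ==> (qv * pu == 0)) in
  C a b c d -> C c d a b -> C (a + c) (b + d) a b -> C (a + c) (b + d) c d ->
  C a b (a + c) (b + d) -> C c d (a + c) (b + d) ->
  ~~ ((a == 0) && (b == 0)) -> ~~ ((c == 0) && (d == 0)) -> (a == c) && (b == d).
Proof.
move=> C.
by case: (F2_cases a) => ->; case: (F2_cases b) => ->; case: (F2_cases c) => ->;
  case: (F2_cases d) => ->; vm_compute.
Qed.

Section Split2.
Variables (S1 S2 : {set V}) (u v : V).
Hypotheses (dis : [disjoint S1 & S2]) (uS1 : u \in S1) (vS2 : v \in S2) (euv : e u v)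
  (cross : forall x y, x \in S1 -> y \in S2 -> e x y -> (x == u) && (y == v)).

Let S := S1 :|: S2.
Let cross' x y : x \in S2 -> y \in S1 -> e x y -> (x == v) && (y == u).
Proof. by move=> xS2 yS1 exy; rewrite andbC; apply: cross => //; rewrite sym_e. Qed.
Let dis' : [disjoint S2 & S1]. Proof. by rewrite disjoint_sym. Qed.
Let evu : e v u. Proof. by rewrite sym_e. Qed.

Let KS1 f w : f \in K S -> w \in S1 -> Nf S1 f w = (w == u)%:R * f v.
Proof. exact: (KS_S1 dis vS2 euv cross). Qed.
Let cross1' f w : w \in S1 -> Nf S f w = Nf S1 f w + (w == u)%:R * f v.
Proof. exact: (cross1 dis vS2 euv cross). Qed.
Let claimA' x g : x \in K S -> x v = 1 -> g \in K S1 -> g u = 0.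
Proof. exact: (claimA dis uS1 vS2 euv cross). Qed.
Let noboth1' f g : f \in K S -> g \in K S -> g v = 0 -> g u * f v = 0.
Proof. exact: (noboth1 dis uS1 vS2 euv cross). Qed.

Lemma cross2 f w : w \in S2 -> Nf S f w = Nf S2 f w + (w == v)%:R * f u.
Proof. by move=> wS2; rewrite /S setUC; exact: (cross1 (S1:=S2) (S2:=S1) (u:=v) (v:=u) dis' uS1 evu cross'). Qed.

Lemma KS_S2 f w : f \in K S -> w \in S2 -> Nf S2 f w = (w == v)%:R * f u.
Proof. by rewrite /S setUC => fK wS2; exact: (KS_S1 (S1:=S2) (S2:=S1) (u:=v) (v:=u) dis' uS1 evu cross'). Qed.

Lemma claimB x g : x \in K S -> x u = 1 -> g \in K S2 -> g v = 0.
Proof. rewrite /S setUC => xK xu gK; exact: (claimA (S1:=S2) (S2:=S1) (u:=v) (v:=u) dis' vS2 uS1 evu cross' xK xu gK). Qed.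

Lemma noboth2 f g : f \in K S -> g \in K S -> g u = 0 -> g v * f u = 0.
Proof. by rewrite /S setUC => fK gK gu; exact: (noboth1 (S1:=S2) (S2:=S1) (u:=v) (v:=u) dis' vS2 uS1 evu cross'). Qed.


Lemma rs_in (T : {set V}) f y : y \in T -> rs T f y = f y.
Proof. by move=> yT; rewrite ffunE yT. Qed.
Lemma rs_out (T : {set V}) f y : y \notin T -> rs T f y = 0.
Proof. by move=> yT; rewrite ffunE (negbTE yT). Qed.

Lemma L1 : (#|K S| <= 2 * (#|K S1| * #|K S2|))%N.
Proof.
pose K00 := [set f in K S | (f u == 0) && (f v == 0)].
have Ha : (#|K00| <= #|K S1| * #|K S2|)%N.
  rewrite -cardsX.
  have inj : {in K00 &, injective (fun f => (rs S1 f, rs S2 f))}.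
    move=> f g; rewrite !inE => /andP[/KP[fo _] _] /andP[/KP[go _] _] [h1 h2].
    apply/ffunP=> y; case yS1: (y \in S1).
      by rewrite -(rs_in f yS1) h1 rs_in.
    case yS2: (y \in S2).
      by rewrite -(rs_in f yS2) h2 rs_in.
    by rewrite fo ?go // /S inE yS1 yS2.
  rewrite -(card_in_imset inj); apply: subset_leq_card; apply/subsetP=> p /imsetP[f].
  rewrite inE => /andP[fK /andP[/eqP fu /eqP fv]] ->; rewrite inE /=; apply/andP; split.
    apply: KI => [y yS|w wS]; first by rewrite rs_out.
    by rewrite (@Nf_eq _ _ f) ?KS1 ?fv ?mulr0 // => y yS; rewrite rs_in.
  apply: KI => [y yS|w wS]; first by rewrite rs_out.
  by rewrite (@Nf_eq _ _ f) ?KS_S2 ?fu ?mulr0 // => y yS; rewrite rs_in.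
have Cgen : forall P Q, P \in K S -> Q \in K S ->
    ((Q v == 0) ==> (Q u * P v == 0)) && ((Q u == 0) ==> (Q v * P u == 0)).
  move=> P Q PK QK; apply/andP; split; apply/implyP=> /eqP H; apply/eqP.
    exact: noboth1'. exact: noboth2.
have [f0 /andP[f0K f0n]|none] := pickP [pred f : {ffun V -> 'F_2} | (f \in K S) && (f \notin K00)].
  have sub : K S \subset K00 :|: [set (h : {ffun V -> 'F_2}) + (f0 : {ffun V -> 'F_2}) | h in K00].
    apply/subsetP=> f fK; rewrite inE; case fK0: (f \in K00) => //=.
    apply/imsetP; exists (f + f0); last first.
      by apply/ffunP=> y; rewrite !ffunE -addrA F2xx addr0.
    have hK := KD fK f0K.
    have := F2_logic (Cgen _ _ f0K fK) (Cgen _ _ fK f0K).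
    have hu : (f + f0) u = f u + f0 u by rewrite ffunE.
    have hv : (f + f0) v = f v + f0 v by rewrite ffunE.
    move: (Cgen _ _ fK hK) (Cgen _ _ f0K hK) (Cgen _ _ hK fK) (Cgen _ _ hK f0K).
    rewrite hu hv => C1 C2 C3 C4 /(_ C1 C2 C3 C4).
    have n1 : ~~ ((f u == 0) && (f v == 0)) by move: fK0; rewrite inE fK => /negbT.
    have n2 : ~~ ((f0 u == 0) && (f0 v == 0)) by move: f0n; rewrite inE f0K.
    move=> /(_ n1 n2) /andP[/eqP e1 /eqP e2].
    by rewrite inE hK hu hv e1 e2 !F2xx eqxx.
  apply: (leq_trans (subset_leq_card sub)); apply: (leq_trans (leq_card_setU _ _)).
  rewrite mul2n -addnn; apply: leq_add; first exact: Ha.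
  exact: (leq_trans (leq_imset_card _ _) Ha).
have sub : K S \subset K00.
  apply/subsetP=> f fK; have := none f; rewrite /= fK /=; by move/negbFE.
apply: (leq_trans (subset_leq_card sub)); rewrite mul2n -addnn.
exact: (leq_trans Ha (leq_addl _ _)).
Qed.

Lemma L2 x : x \in K S -> x u = 1 -> x v = 1 -> (2 * (#|K S1| * #|K S2|) <= #|K S|)%N.
Proof.
move=> xK xu xv.
have g1u g : g \in K S1 -> g u = 0 by exact: claimA' xK xv.
have g2v g : g \in K S2 -> g v = 0 by exact: claimB xK xu.
have K1 g : g \in K S1 -> g \in K S.
  move=> gK; have gK' := gK; move/KP: gK' => [go gN].
  have g2 y : y \in S2 -> g y = 0 by move=> yS2; rewrite go // (disjointFl dis yS2).
  apply: KI => [y yS|w]; first by rewrite go //; apply: contra yS; rewrite inE => ->.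
  rewrite inE => /orP[wS1|wS2].
    by rewrite cross1' // gN // g2 // mulr0 addr0.
  rewrite cross2 // g1u // mulr0 addr0 /Nf big1 // => y yS2; by rewrite g2 // mulr0.
have K2 g : g \in K S2 -> g \in K S.
  move=> gK; have gK' := gK; move/KP: gK' => [go gN].
  have g1 y : y \in S1 -> g y = 0 by move=> yS1; rewrite go // (disjointFr dis yS1).
  apply: KI => [y yS|w]; first by rewrite go //; apply: contra yS; rewrite inE orbC => ->.
  rewrite inE => /orP[wS1|wS2].
    rewrite cross1' // g2v // mulr0 addr0 /Nf big1 // => y yS1; by rewrite g1 // mulr0.
  by rewrite cross2 // gN // g1 // mulr0 addr0.
pose Psi (p : bool * ({ffun V -> 'F_2} * {ffun V -> 'F_2})) : {ffun V -> 'F_2} :=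
  p.2.1 + p.2.2 + (if p.1 then x else 0).
pose D := setX [set: bool] (setX (K S1) (K S2)).
have cD : #|D| = (2 * (#|K S1| * #|K S2|))%N by rewrite !cardsX cardsT card_bool.
rewrite -cD.
have inj : {in D &, injective Psi}.
  move=> [b [g1 g2]] [b' [g1' g2']]; rewrite !inE /= => /andP[g1K g2K] /andP[g1K' g2K'].
  rewrite /Psi /= => E.
  have Eu := congr1 (fun f : {ffun V -> 'F_2} => f u) E.
  have g2u : g2 u = 0 by apply: (KP g2K).1; rewrite (disjointFr dis uS1).
  have g2u' : g2' u = 0 by apply: (KP g2K').1; rewrite (disjointFr dis uS1).
  move: Eu; rewrite /= !ffunE (g1u _ g1K) (g1u _ g1K') g2u g2u' !add0r => Eb.
  have bb : b = b'.
    clear E; move: Eb; case: b; case: b' => //=; rewrite ffunE xu => /eqP;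
      by rewrite ?oner_eq0 // eq_sym oner_eq0.
  subst b'; move/addIr: E => E.
  have E' y := congr1 (fun f : {ffun V -> 'F_2} => f y) E.
  have e1 : g1 = g1'.
    apply/ffunP=> y; have := E' y; rewrite /= !ffunE.
    case yS1: (y \in S1).
      by rewrite (KP g2K).1 ?(KP g2K').1 ?(disjointFr dis yS1) // !addr0.
    by rewrite (KP g1K).1 ?(KP g1K').1 ?yS1.
  have e2 : g2 = g2'.
    apply/ffunP=> y; have := E' y; rewrite /= !ffunE.
    case yS2: (y \in S2).
      by rewrite (KP g1K).1 ?(KP g1K').1 ?(disjointFl dis yS2) // !add0r.
    by rewrite (KP g2K).1 ?(KP g2K').1 ?yS2 // !add0r.
  by rewrite e1 e2.
rewrite -(card_in_imset inj); apply: subset_leq_card; apply/subsetP=> f /imsetP[[b [g1 g2]]].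
rewrite !inE /= => /andP[g1K g2K] ->; rewrite /Psi /=.
apply: KD; first exact: KD (K1 _ g1K) (K2 _ g2K).
by case: b => //; exact: K0.
Qed.

End Split2.
End Lin.

Local Close Scope ring_scope.

Lemma connect_ind_r (T : finType) (r : rel T) (P : T -> Prop) a :
  P a -> (forall x y, connect r a x -> r x y -> P x -> P y) ->
  forall y, connect r a y -> P y.
Proof.
move=> Pa step y /connectP[p pth ->].
suff H : forall x q, connect r a x -> path r x q -> P x -> P (last x q) by exact: H.
move=> x q; elim: q x => //= z q IH x cx /andP[rxz pz] Px.
apply: IH pz _; first exact: connect_trans cx (connect1 rxz).
exact: step cx rxz Px.
Qed.

Section Graph.
Variables (V : finType) (e : rel V).
Hypotheses (sym_e : symmetric e) (irr_e : irreflexive e) (acyc : acyclic e).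

Lemma induced_sym (r : rel V) (S : {set V}) : symmetric r -> symmetric (induced_rel r S).
Proof. by move=> sr x y; rewrite /induced_rel sr andbCA. Qed.

Lemma remove_sym u v : symmetric (remove_edge e u v).
Proof.
move=> x y; rewrite /remove_edge sym_e.
by case: (x == u); case: (y == v); case: (x == v); case: (y == u); rewrite ?andbF ?andbT.
Qed.

Lemma connect_inS (r : rel V) (S : {set V}) a w : a \in S -> connect (induced_rel r S) a w -> w \in S.
Proof.
move=> aS; apply: (@connect_ind_r _ _ (fun w => w \in S)) => // x y _ /and3P[_ yS _] _; exact: yS.
Qed.

Lemma reach_conn (S : {set V}) u v a : a \in S ->
  connected_set e [set w | connect (induced_rel (remove_edge e u v) S) a w].
Proof.
move=> aS; set R := induced_rel _ _; set A := [set w | _].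
have aA : a \in A by rewrite inE connect0.
have H : forall w, connect R a w -> connect (induced_rel e A) a w.
  apply: (@connect_ind_r _ _ (fun w => connect (induced_rel e A) a w)) => // x y cx Rxy cax.
  apply: connect_trans cax (connect1 _).
  case/and3P: (Rxy) => _ _ /andP[exy _].
  by rewrite /induced_rel exy !inE cx (connect_trans cx (connect1 Rxy)).
split; first by apply/set0Pn; exists a.
move=> x y; rewrite !inE => /H ax /H ay.
have symA : connect_sym (induced_rel e A) by apply: sym_connect_sym; apply: induced_sym.
by apply: connect_trans ay; rewrite symA.
Qed.

Definition uvedge (u v x y : V) := ((x == u) && (y == v)) || ((x == v) && (y == u)).

Lemma split_tree (S : {set V}) u v : connected_set e S -> u \in S -> v \in S -> e u v ->
  exists S1 S2 : {set V},
  [/\ [disjoint S1 & S2], S = S1 :|: S2, u \in S1 & v \in S2] /\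
  [/\ connected_set e S1, connected_set e S2,
     (forall x y, x \in S1 -> y \in S2 -> e x y -> (x == u) && (y == v)) &
     (forall x y, x \in S -> y \in S -> e x y -> ~~ uvedge u v x y -> (x \in S1) = (y \in S1))].
Proof.
move=> [_ Sc] uS vS euv.
set R := induced_rel (remove_edge e u v) S.
have symR : connect_sym R by apply: sym_connect_sym; apply: induced_sym; apply: remove_sym.
have noRuv : ~~ connect R u v.
  apply: contra (acyc euv); apply: connect_sub => x y /and3P[_ _ rxy]; exact: connect1.
have clo x y : x \in S -> y \in S -> e x y -> ~~ uvedge u v x y -> R x y.
  by move=> xS yS exy nuv; rewrite /R /induced_rel xS yS /remove_edge exy.
have cl a x y : R x y -> connect R a x = connect R a y.
  exact: (connect_closed symR a).
have dis : [disjoint [set w | connect R u w] & [set w | connect R v w]].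
  rewrite disjoints_subset; apply/subsetP=> w; rewrite !inE => cuw; apply/negP=> cvw.
  by move/negP: noRuv; apply; apply: connect_trans cuw _; rewrite symR.
exists [set w | connect R u w], [set w | connect R v w]; split; split => //.
- apply/setP=> w; rewrite !inE; apply/idP/idP=> [wS|/orP[]]; last first.
    exact: connect_inS. exact: connect_inS.
  suff : (u \in [pred w | connect R u w || connect R v w]) = (w \in [pred w | connect R u w || connect R v w]).
    by rewrite !inE connect0 /= => <-.
  apply: (closed_connect _ (Sc u w uS wS)).
    move=> x y /and3P[xS yS exy]; rewrite !inE.
    case E : (uvedge u v x y).
      by case/orP: E => /andP[/eqP -> /eqP ->]; rewrite !connect0 ?orbT.
    by rewrite (cl u x y) ?(cl v x y) // clo // E.
- by rewrite inE connect0.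
- by rewrite inE connect0.
- exact: reach_conn.
- exact: reach_conn.
- move=> x y; rewrite !inE => cux cvy exy.
  have xS := connect_inS uS cux; have yS := connect_inS vS cvy.
  case E : (uvedge u v x y).
    case/orP: E => // /andP[/eqP xv _]; by move: noRuv; rewrite -xv cux.
  have : connect R u y by rewrite -(cl u x y) // clo // E.
  move=> cuy; have := dis; rewrite disjoints_subset => /subsetP /(_ y).
  by rewrite !inE cuy cvy => /(_ isT).
- move=> x y xS yS exy nuv; rewrite !inE; apply: cl; exact: clo.
Qed.

Local Open Scope ring_scope.
Lemma kernel_edge (S : {set V}) : (0 < nullity e S)%N -> exists u v (x : {ffun V -> 'F_2}),
  [/\ u \in S, v \in S, e u v, x \in K e S & (x u = 1) /\ (x v = 1)].
Proof.
move=> nz.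
have [x /andP[xK x0]|none] := pickP [pred x : {ffun V -> 'F_2} | (x \in K e S) && (x != 0)]; last first.
  have : (#|K e S| <= #|[set (0%R : {ffun V -> 'F_2})]|)%N.
    apply: subset_leq_card; apply/subsetP=> x xK.
    by rewrite inE; have := none x; rewrite /= xK /= => /negbFE.
  rewrite cards1 cardK => H; have := leq_pexp2l (isT : (0 < 2)%N) nz.
  by rewrite expn1 => /leq_trans /(_ H).
have [u xu|none] := pickP [pred u | x u != 0]; last first.
  have x00 : x = 0.
    by apply/ffunP=> u; rewrite ffunE; have := none u => /negbFE/eqP.
  by rewrite x00 eqxx in x0.
have xu1 : x u = 1 by move: xu => /= xu; case: (F2_cases (x u)) => // E; rewrite E eqxx in xu.
have [xo xN] := KP xK.
have uS : u \in S.
  case uS: (u \in S) => //; have : x u = 0 by rewrite xo ?uS.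
  by rewrite xu1 => /eqP; rewrite oner_eq0.
have [y /andP[/andP[yS yu] ny]|none] := pickP [pred y | (y \in S) && (y != u) && ((nb e u y)%:R * x y != 0)].
  have nbt : nb e u y by move: ny; case: (nb e u y) => //; rewrite mul0r eqxx.
  have eyu : e y u by move: nbt; rewrite /nb (negbTE yu).
  exists u, y, x; split => //; first by rewrite sym_e.
  split => //; case: (F2_cases (x y)) ny => ->; rewrite ?mulr0 ?eqxx //.
have := xN u uS; rewrite /Nf (bigD1 u) //= big1.
  by rewrite /nb eqxx /= mul1r xu1 addr0 => /eqP; rewrite oner_eq0.
move=> y /andP[yS yu]; have := none y; rewrite /= yS yu /= => /negbFE/eqP.
by [].
Qed.
Local Close Scope ring_scope.
Local Close Scope ring_scope.

Definition blocks_ok (P : {set {set V}}) :=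
  forall B, B \in P -> connected_set e B /\ always_solvable e B.

Section Nul.
Variables (S1 S2 : {set V}) (u v : V).
Hypotheses (dis : [disjoint S1 & S2]) (uS1 : u \in S1) (vS2 : v \in S2) (euv : e u v)
  (cross : forall x y, x \in S1 -> y \in S2 -> e x y -> (x == u) && (y == v)).

Lemma nul_le : nullity e (S1 :|: S2) <= (nullity e S1 + nullity e S2).+1.
Proof.
have := L1 sym_e dis uS1 vS2 euv cross.
by rewrite !cardK -expnD -expnS leq_exp2l.
Qed.

Lemma nul_ge (x : {ffun V -> 'F_2}) : x \in K e (S1 :|: S2) -> x u = 1%R -> x v = 1%R ->
  (nullity e S1 + nullity e S2).+1 <= nullity e (S1 :|: S2).
Proof.
move=> xK xu xv; have := L2 sym_e dis uS1 vS2 euv cross xK xu xv.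
by rewrite !cardK -expnD -expnS leq_exp2l.
Qed.
End Nul.

Lemma sub_cover (P : {set {set V}}) B : B \in P -> B \subset cover P.
Proof. by move=> BP; apply: (bigcup_sup B BP). Qed.

Lemma card_disjU (P1 P2 : {set {set V}}) S1 S2 : partition P1 S1 -> partition P2 S2 ->
  [disjoint S1 & S2] -> #|P1 :|: P2| = #|P1| + #|P2|.
Proof.
move=> /and3P[/eqP c1 _ n1] /and3P[/eqP c2 _ n2] d.
have := cardsUI P1 P2; suff -> : P1 :&: P2 = set0 by rewrite cards0 addn0.
apply/setP=> B; rewrite !inE; apply/negP=> /andP[B1 B2].
have := sub_cover B1; have := sub_cover B2; rewrite c1 c2 => s2 s1.
have : B \subset S1 :&: S2 by rewrite subsetI s1 s2.
rewrite (disjoint_setI0 d) subset0 => /eqP B0.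
by move: n1; rewrite -B0 B1.
Qed.

Lemma partU (P1 P2 : {set {set V}}) S1 S2 : partition P1 S1 -> partition P2 S2 ->
  [disjoint S1 & S2] -> partition (P1 :|: P2) (S1 :|: S2).
Proof.
move=> /and3P[/eqP c1 t1 n1] /and3P[/eqP c2 t2 n2] d.
apply/and3P; split.
- by rewrite /cover bigcup_setU -/(cover P1) -/(cover P2) c1 c2.
- by apply: trivIsetU => //; rewrite c1 c2.
- by rewrite inE negb_or n1 n2.
Qed.

Lemma arith1 a b c : a <= (b + c).+1 -> (b + c).+1 <= a -> b.+1 + c.+1 = a.+1.
Proof. lia. Qed.
Lemma arith2 a b c p1 p2 p : p1 + p2 <= p -> b.+1 <= p1 -> c.+1 <= p2 -> a <= (b + c).+1 -> a.+1 <= p.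
Proof. lia. Qed.

Lemma main n : forall S : {set V}, #|S| <= n -> connected_set e S ->
  (exists P, [/\ partition P S, blocks_ok P & #|P| = (nullity e S).+1]) /\
  (forall P, partition P S -> blocks_ok P -> (nullity e S).+1 <= #|P|).
Proof.
elim: n => [|n IH] S cS conS.
  by move: conS => [Sn0 _]; move: cS; rewrite leqn0 cards_eq0 (negbTE Sn0).
have [Sn0 Sc] := conS.
have small : forall S1 S2 : {set V}, [disjoint S1 & S2] -> S = S1 :|: S2 -> S2 != set0 -> #|S1| <= n.
  move=> S1 S2 d SE n2; have := cardsUI S1 S2; rewrite (disjoint_setI0 d) cards0 addn0 -SE => E.
  rewrite -ltnS; apply: leq_trans cS; rewrite E -{1}[#|S1|]addn0 ltn_add2l card_gt0 //.
split.
  case: (posnP (nullity e S)) => [nz0|nzpos].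
    exists [set S]; split.
    - apply/and3P; split; first by rewrite cover1.
        exact: trivIset1.
      by rewrite inE eq_sym.
    - by move=> B /set1P ->; split.
    - by rewrite cards1 nz0.
  have [u [v [x [uS vS euv xK [xu xv]]]]] := kernel_edge nzpos.
  have [S1 [S2 [[d SE uS1 vS2] [con1 con2 cross clo]]]] := split_tree conS uS vS euv.
  have n1 : S1 != set0 by apply/set0Pn; exists u.
  have n2 : S2 != set0 by apply/set0Pn; exists v.
  have d' : [disjoint S2 & S1] by rewrite disjoint_sym.
  have [[P1 [pp1 bo1 c1]] _] := IH S1 (small _ _ d SE n2) con1.
  have [[P2 [pp2 bo2 c2]] _] := IH S2 (small _ _ d' (etrans SE (setUC _ _)) n1) con2.
  exists (P1 :|: P2); split.
  - by rewrite SE; exact: partU.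
  - by move=> B; rewrite inE => /orP[/bo1|/bo2].
  - rewrite (card_disjU pp1 pp2 d) c1 c2.
    have le := nul_le d uS1 vS2 euv cross.
    rewrite SE in xK; have ge := nul_ge d uS1 vS2 euv cross xK xu xv.
    rewrite SE; exact: arith1.
move=> P pP bP; have [/eqP cov triv n0] := and3P pP.
have [[u v] /= /and4P[uS vS euv neq] | none] := pickP [pred p : V * V |
    [&& p.1 \in S, p.2 \in S, e p.1 p.2 & pblock P p.1 != pblock P p.2]].
  have [S1 [S2 [[d SE uS1 vS2] [con1 con2 cross clo]]]] := split_tree conS uS vS euv.
  have n1 : S1 != set0 by apply/set0Pn; exists u.
  have n2 : S2 != set0 by apply/set0Pn; exists v.
  have d' : [disjoint S2 & S1] by rewrite disjoint_sym.
  have side : forall B, B \in P -> (B \subset S1) || (B \subset S2).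
    move=> B BP; have [[Bn0 Bc] _] := bP B BP.
    have BS : B \subset S by rewrite -cov; exact: sub_cover.
    have [b bB] := set0Pn _ Bn0.
    have H y : y \in B -> (b \in S1) = (y \in S1).
      move=> yB; apply: (closed_connect _ (Bc b y bB yB)).
      move=> x z /and3P[xB zB exz]; apply: clo => //; try exact: (subsetP BS).
      apply/negP=> /orP[] /andP[/eqP xu /eqP zv]; move: neq; subst x z;
        by rewrite (def_pblock triv BP xB) (def_pblock triv BP zB) eqxx.
    case bS1: (b \in S1).
      by apply/orP; left; apply/subsetP=> y yB; rewrite -(H y yB).
    apply/orP; right; apply/subsetP=> y yB.
    have := (subsetP BS) y yB; rewrite SE inE -(H y yB) bS1 /=.
    by [].
  have part_side : forall (S1 S2 : {set V}), [disjoint S1 & S2] -> S = S1 :|: S2 ->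
      (forall B, B \in P -> (B \subset S1) || (B \subset S2)) ->
      partition [set B in P | B \subset S1] S1.
    move=> T1 T2 dT TE sd; apply/and3P; split.
    - apply/eqP/setP=> y; apply/bigcupP/idP=> [[B] | yT1].
        by rewrite inE => /andP[_ /subsetP]; apply.
      have yS : y \in cover P by rewrite cov TE inE yT1.
      exists (pblock P y); last by rewrite mem_pblock.
      rewrite inE pblock_mem //=.
      have := sd _ (pblock_mem yS); case/orP => // /subsetP /(_ y).
      by rewrite mem_pblock yS (disjointFr dT yT1) => /(_ isT).
    - by apply: trivIsetS triv; apply/subsetP=> B; rewrite inE => /andP[].
    - by rewrite inE negb_and n0.
  have side' : forall B, B \in P -> (B \subset S2) || (B \subset S1).
    by move=> B /side; rewrite orbC.
  have pp1 := part_side S1 S2 d SE side.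
  have pp2 := part_side S2 S1 d' (etrans SE (setUC _ _)) side'.
  have bo1 : blocks_ok [set B in P | B \subset S1] by move=> B; rewrite inE => /andP[/bP].
  have bo2 : blocks_ok [set B in P | B \subset S2] by move=> B; rewrite inE => /andP[/bP].
  have [_ l1] := IH S1 (small _ _ d SE n2) con1.
  have [_ l2] := IH S2 (small _ _ d' (etrans SE (setUC _ _)) n1) con2.
  have := l1 _ pp1 bo1; have := l2 _ pp2 bo2.
  have sumle : #|[set B in P | B \subset S1]| + #|[set B in P | B \subset S2]| <= #|P|.
    rewrite -(card_disjU pp1 pp2 d); apply: subset_leq_card; apply/subsetP=> B.
    by rewrite !inE => /orP[] /andP[].
  have le := nul_le d uS1 vS2 euv cross.
  rewrite -SE in le; move=> h2 h1; exact: arith2 sumle h1 h2 le.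
have [a aS] := set0Pn _ Sn0.
have aP : a \in cover P by rewrite cov.
have BP := pblock_mem aP.
have SB : S \subset pblock P a.
  apply/subsetP=> y yS.
  suff : (a \in pblock P a) = (y \in pblock P a) by rewrite mem_pblock aP => <-.
  apply: (closed_connect _ (Sc a y aS yS)).
  move=> x z /and3P[xS zS exz].
  have := none (x, z); rewrite /= xS zS exz /= => /negbFE/eqP pxz.
  by rewrite -(@eq_pblock _ P a x triv aP) -(@eq_pblock _ P a z triv aP) pxz.
have BS : pblock P a \subset S by rewrite -cov; exact: sub_cover.
have [_ asol] := bP _ BP.
have -> : S = pblock P a by apply/eqP; rewrite eqEsubset SB BS.
rewrite asol card_gt0; apply/set0Pn; by exists (pblock P a).
Qed.
End Graph.

Theorem theorem4p4 (V : finType) (e : rel V) :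
  is_tree e -> is_pi e (nullity e [set: V]).+1.
Proof.
move=> [[sym_e irr_e] [conT acyc]].
have [[P [pP bP cP]] low] := main sym_e acyc (leqnn #|[set: V]|) conT.
split; first by exists P; split => //; split.
by move=> Q [pQ bQ]; apply: low.
Qed.
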